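(* Let $n\ge 1$ and $k\ge 1$ be natural numbers and let $$\phi_k \;=\; \Box \bigvee_{i=1}^k \Big(p_i\wedge \bigwedge_{j\neq i} \neg p_j\Big) \;\to\; \lozenge \bigvee_{i=1}^k (p_i\wedge \lozenge p_i).$$ Then $\phi_k$ is valid in the frame $(\mathbb{R}^n,R_{=1})$ if and only if $k<\chi(S^n)$.
   Context: Modal formulas are built from propositional variables using $\bot$, $\to$ and one unary modality $\lozenge$, with $\Box=\neg\lozenge\neg$. In the frame $(\mathbb{R}^n,R_{=1})$, $xR_{=1}y$ iff $\|x-y\|=1$ (Euclidean norm); $x\models\lozenge\varphi$ iff some $y$ with $xR_{=1}y$ satisfies $\varphi$; a formula is valid if it is true at every point under every valuation (assignment of subsets of $\mathbb{R}^n$ to variables). $S^n$ denotes the unit sphere $\{x\in\mathbb{R}^n:\|x\|=1\}$ of $\mathbb{R}^n$, regarded as a graph in which two points are adjacent iff their distance is exactly $1$, and $\chi(S^n)$ is its chromatic number (which is finite). *)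

(* Defs.v *)
From HB Require Import structures.
From mathcomp Require Import all_boot all_order all_algebra.
From mathcomp Require Import boolp classical_sets reals.
Set Implicit Arguments. Unset Strict Implicit. Unset Printing Implicit Defensive.
Import Order.TTheory GRing.Theory Num.Theory.
Local Open Scope ring_scope.

Inductive form : Type :=
| Var : nat -> form
| Bot : form
| Imp : form -> form -> form
| Dia : form -> form.

Definition Neg (a : form) : form := Imp a Bot.
Definition Top : form := Neg Bot.
Definition Or (a b : form) : form := Imp (Neg a) b.
Definition And (a b : form) : form := Neg (Imp a (Neg b)).
Definition Box (a : form) : form := Neg (Dia (Neg a)).
Definition bigOr (s : seq form) : form := foldr Or Bot s.
Definition bigAnd (s : seq form) : form := foldr And Top s.

Fixpoint sat (W : Type) (Rel : W -> W -> Prop) (V : nat -> W -> Prop)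
  (f : form) (x : W) : Prop :=
  match f with
  | Var i => V i x
  | Bot => False
  | Imp a b => sat Rel V a x -> sat Rel V b x
  | Dia a => exists y, Rel x y /\ sat Rel V a y
  end.

Definition valid_in (W : Type) (Rel : W -> W -> Prop) (f : form) : Prop :=
  forall (V : nat -> W -> Prop) (x : W), sat Rel V f x.

Definition eucl_norm (R : realType) (n : nat) (x : 'rV[R]_n) : R :=
  Num.sqrt (\sum_(i < n) x ord0 i ^+ 2).

Definition R_eq1 (R : realType) (n : nat) (x y : 'rV[R]_n) : Prop :=
  eucl_norm (x - y) = 1.

(* phi_k, with variables p_1..p_k encoded as Var 0 .. Var (k-1) *)
Definition phi (k : nat) : form :=
  Imp (Box (bigOr [seq And (Var i) (bigAnd [seq Neg (Var j) | j <- iota 0 k & j != i])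
                  | i <- iota 0 k]))
      (Dia (bigOr [seq And (Var i) (Dia (Var i)) | i <- iota 0 k])).

Definition sphere (R : realType) (n : nat) : Type :=
  {x : 'rV[R]_n | eucl_norm x = 1}.

Definition colorable (R : realType) (n c : nat) : Prop :=
  exists f : sphere R n -> 'I_c,
    forall x y : sphere R n, R_eq1 (proj1_sig x) (proj1_sig y) -> f x <> f y.

Lemma colorable_ex_bool (R : realType) (n : nat) :
  (exists c, colorable R n c) -> exists c, `[< colorable R n c >].
Proof. by move=> [c Hc]; exists c; apply/asboolP. Qed.

(* chromatic number: least c admitting a proper c-colouring
   (0 by convention if none exists; the paper notes it is finite) *)
Definition chi (R : realType) (n : nat) : nat :=
  match pselect (exists c, colorable R n c) with
  | left H => ex_minn (colorable_ex_bool H)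
  | right _ => 0
  end.

(* Main.v *)
Require Import Defs.
From HB Require Import structures.
From mathcomp Require Import all_boot all_order all_algebra.
From mathcomp Require Import boolp classical_sets reals.
From mathcomp Require Import ring lra.
Set Implicit Arguments. Unset Strict Implicit. Unset Printing Implicit Defensive.
Import Order.TTheory GRing.Theory Num.Theory.
Local Open Scope ring_scope.

Section Logic.
Variables (W : Type) (Rel : W -> W -> Prop) (V : nat -> W -> Prop).

Lemma satOr a b x : sat Rel V (Or a b) x <-> sat Rel V a x \/ sat Rel V b x.
Proof.
simpl; split.
  by move=> H; case: (pselect (sat Rel V a x)) => Ha; [left|right; apply: H].
by case=> H // Hn; exfalso; apply: Hn.
Qed.

Lemma satAnd a b x : sat Rel V (And a b) x <-> sat Rel V a x /\ sat Rel V b x.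
Proof.
simpl; split.
  move=> H; case: (pselect (sat Rel V a x)) => Ha; last by exfalso; apply: H.
  case: (pselect (sat Rel V b x)) => Hb //; by exfalso; apply: H.
by case=> Ha Hb H; exact: H Ha Hb.
Qed.

Lemma sat_bigOr (g : nat -> Defs.form) (s : seq nat) x :
  sat Rel V (bigOr (map g s)) x <-> exists2 i, i \in s & sat Rel V (g i) x.
Proof.
elim: s => [|j s IH]; first by split=> // -[].
rewrite [bigOr _]/= satOr IH; split.
  case=> [H|[i Hi H]]; first by exists j; rewrite ?mem_head.
  by exists i; rewrite // in_cons Hi orbT.
case=> i; rewrite in_cons => /orP[/eqP->|Hi] H; first by left.
by right; exists i.
Qed.

Lemma sat_bigAnd (g : nat -> Defs.form) (s : seq nat) x :
  sat Rel V (bigAnd (map g s)) x <-> forall i, i \in s -> sat Rel V (g i) x.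
Proof.
elim: s => [|j s IH]; first by split=> [_ i|_ []]; rewrite ?in_nil.
rewrite [bigAnd _]/= satAnd IH; split.
  by case=> H1 H2 i; rewrite in_cons => /orP[/eqP->|]; [|apply: H2].
move=> H; split; first by apply: H; rewrite mem_head.
by move=> i Hi; apply: H; rewrite in_cons Hi orbT.
Qed.
Lemma satBox a x : sat Rel V (Box a) x <-> forall y, Rel x y -> sat Rel V a y.
Proof.
simpl; split.
  move=> H y Hy; case: (pselect (sat Rel V a y)) => // Hn; exfalso.
  by apply: H; exists y.
by move=> H [y [Hy Hn]]; apply: Hn; apply: H.
Qed.
End Logic.
Section Geo.
Variables (R : realType) (n : nat).

Lemma eucl_normN (x : 'rV[R]_n) : eucl_norm (- x) = eucl_norm x.
Proof. by rewrite /eucl_norm; congr Num.sqrt; apply: eq_bigr => i _; rewrite mxE sqrrN. Qed.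

Lemma eucl_norm1 (x : 'rV[R]_n) : eucl_norm x = 1 -> \sum_(i < n) x ord0 i ^+ 2 = 1.
Proof.
move=> H; have := @sqr_sqrtr R (\sum_(i < n) x ord0 i ^+ 2).
by rewrite -/(eucl_norm x) H expr1n => ->; rewrite // sumr_ge0 // => i _; rewrite sqr_ge0.
Qed.

Lemma coord_le (x : 'rV[R]_n) i : eucl_norm x = 1 -> x ord0 i ^+ 2 <= 1.
Proof.
move/eucl_norm1 => <-; rewrite (bigD1 i) //= lerDl sumr_ge0 // => j _.
by rewrite sqr_ge0.
Qed.

Lemma sphere_colorable : exists c, colorable R n c.
Proof.
pose m := n.+1.
pose T := {ffun 'I_n -> 'I_(2 * m).+1}.
pose a (x : 'rV[R]_n) i := (x ord0 i + 1) * m%:R.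
pose g (x : 'rV[R]_n) : T := [ffun i => inord (Num.truncn (a x i))].
exists #|T|; exists (fun s => enum_rank (g (proj1_sig s))).
move=> [x Hx] [y Hy] /= Hxy /enum_rank_inj Hg.
have Hm : (0 : R) <= m%:R by rewrite ler0n.
have Ha : forall (z : 'rV[R]_n) i, eucl_norm z = 1 ->
   0 <= a z i /\ (Num.truncn (a z i) <= 2 * m)%N.
  move=> z i Hz; have := coord_le i Hz => H1.
  have H2 : -1 <= z ord0 i <= 1 by apply/andP; split; nra.
  case/andP: H2 => H2 H3.
  split; first by rewrite /a mulr_ge0 //; lra.
  have E : ((2 * m).+1%:R : R) = 2%:R * m%:R + 1 by rewrite -addn1 natrD natrM.
  rewrite Num.Theory.truncn_le_nat /a E.
  have : (z ord0 i + 1) * m%:R <= 2%:R * m%:R by rewrite ler_wpM2r //; lra.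
  lra.
have Hi : forall i, (x ord0 i - y ord0 i) ^+ 2 * (m%:R ^+ 2) <= 1.
  move=> i; have := congr1 (fun h : T => val (h i)) Hg; rewrite !ffunE /=.
  have [Hx0 Hx1] := Ha x i Hx; have [Hy0 Hy1] := Ha y i Hy.
  rewrite !inordK ?ltnS // => Ht.
  have := Num.Theory.truncn_itv Hx0; have := Num.Theory.truncn_itv Hy0.
  rewrite Ht => /andP[B1 B2] /andP[B3 B4].
  have -> : (x ord0 i - y ord0 i) ^+ 2 * m%:R ^+ 2 = (a x i - a y i) ^+ 2.
    by rewrite /a; ring.
  move: B1 B2 B3 B4; rewrite mulrS; set t := (Num.truncn (a y i))%:R; nra.
have := eucl_norm1 Hxy.
have Hs : \sum_(i < n) ((x - y) ord0 i ^+ 2 * m%:R ^+ 2) <= n%:R.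
  rewrite -[n in _ <= n%:R]card_ord -sumr_const; apply: ler_sum => i _.
  by rewrite !mxE.
rewrite -mulr_suml in Hs => H; rewrite H mul1r in Hs.
have := ler0n R n; move: Hs; rewrite /m mulrS; nra.
Qed.
End Geo.

Lemma colorable_widen (R : realType) n c c' : (c <= c')%N ->
  colorable R n c -> colorable R n c'.
Proof.
move=> Hc [f Hf]; exists (fun s => widen_ord Hc (f s)) => s t Hst E.
by apply: (Hf s t Hst); apply: val_inj; have := congr1 val E.
Qed.

Lemma chi_lt (R : realType) n k : (k < chi R n)%N <-> ~ colorable R n k.
Proof.
rewrite /chi; case: pselect => [H|H]; last by exfalso; apply: H; exact: sphere_colorable.
case: ex_minnP => c /asboolP Hc Hmin; split.
  by move=> Hk Hck; have := Hmin k (asboolT Hck); rewrite leqNgt Hk.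
move=> Hn; rewrite ltnNge; apply/negP => Hck; apply: Hn.
exact: colorable_widen Hck Hc.
Qed.

Theorem proposition3p13 (R : realType) (n k : nat) :
  (1 <= n)%N -> (1 <= k)%N ->
  (valid_in (@R_eq1 R n) (phi k) <-> (k < chi R n)%N).
Proof.
move=> _ _; rewrite chi_lt; split.
  move=> Hv [f Hf].
  pose V (i : nat) (z : 'rV[R]_n) := exists s : sphere R n, proj1_sig s = z /\ nat_of_ord (f s) = i.
  have := Hv V 0; rewrite /phi; cbn [sat]; rewrite satBox; case.
    move=> y Hy.
    have Hy' : eucl_norm y = 1 by rewrite /R_eq1 sub0r eucl_normN in Hy.
    pose s : sphere R n := exist _ y Hy'.
    apply/sat_bigOr; exists (nat_of_ord (f s)); first by rewrite mem_iota /= ltn_ord.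
    apply/satAnd; split; first by exists s.
    apply/sat_bigAnd => j; rewrite mem_filter => /andP[Hj _] /=.
    move=> [[y' p'] [/= Es Ej]]; subst y'.
    have E : p' = Hy' := eq_irrelevance _ _.
    by subst p'; rewrite -Ej eqxx in Hj.
  move=> y [Hy /sat_bigOr [i _ /satAnd [[s [Es Ei]] [z [Hz [s' [Es' Ei']]]]]]].
  apply: (Hf s s'); first by rewrite Es Es'.
  by apply: val_inj; rewrite /= Ei Ei'.
move=> Hnc V x; rewrite /phi; cbn [sat]; rewrite satBox => HB.
apply: contrapT => HN; apply: Hnc.
have Rx : forall s : sphere R n, R_eq1 x (x + proj1_sig s).
  by move=> s; rewrite /R_eq1 opprD addrA subrr add0r eucl_normN; exact: (proj2_sig s).
have Hex : forall s : sphere R n, exists i : 'I_k, V i (x + proj1_sig s).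
  move=> s; have := HB _ (Rx s).
  case/sat_bigOr => i; rewrite mem_iota add0n => /andP[_ Hik] /satAnd [Hi _].
  by exists (Ordinal Hik).
have [f Hf] := choice Hex; exists f => s s' Hss' Heq; apply: HN.
exists (x + proj1_sig s); split; first exact: Rx.
apply/sat_bigOr; exists (nat_of_ord (f s)); first by rewrite mem_iota /= ltn_ord.
apply/satAnd; split; first exact: Hf.
exists (x + proj1_sig s'); split.
  by rewrite /R_eq1 opprD addrACA subrr add0r.
by rewrite Heq; exact: Hf.
Qed.
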